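(* Let $\mathbf{t}_{3/2}=(t_i)_{i\ge 0}$ be the Thue--Morse word in base $3/2$. For integers $n\ge 0$, $N\ge 0$, a letter $c\in\{0,1\}$ and $k\in\mathbb{Z}$, let \[ C_n(c,k,N)=\#\{0\le i<N : t_i=c,\ i\equiv k \pmod{2^n}\}. \] Then for all $n\ge 0$, $c\in\{0,1\}$ and $k\in\mathbb{Z}$, \[ \lim_{N\to\infty}\frac{C_n(c,k,N)}{N}=\frac{1}{2^{n+1}}. \] In particular, the frequency of $0$ (and of $1$) in $\mathbf{t}_{3/2}$, i.e. $\lim_{N\to\infty}\#\{0\le i<N: t_i=c\}/N$, exists and equals $1/2$.
   Context: Base-$3/2$ expansions: $\langle 0\rangle_{3/2}$ is the empty word, and for $n\ge 1$, writing $2n=3m+d$ with integers $m\ge 0$ and $d\in\{0,1,2\}$, one sets $\langle n\rangle_{3/2}=\langle m\rangle_{3/2}\,d$ (so that $n=\sum_i d_i\frac12(\frac32)^i$ with digits $d_i\in\{0,1,2\}$). The Thue--Morse word in base $3/2$ is $\mathbf{t}_{3/2}=(t_n)_{n\ge0}\in\{0,1\}^{\mathbb{N}}$ where $t_n$ is the sum of the digits of $\langle n\rangle_{3/2}$ reduced modulo $2$. Equivalently, it is the unique binary sequence with $t_0=0$ and $t_{3n}=t_{3n+1}=t_{2n}$, $t_{3n+2}=1-t_{2n+1}$ for all $n\ge0$; it begins $001110111110110111110000110110\cdots$. *)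

(* Defs.v *)
From Stdlib Require Import Arith ZArith Reals.
From Coquelicot Require Import Coquelicot.

(* Sum of digits of the base-3/2 expansion <n>_{3/2}:
   <0> is the empty word; for n >= 1, write 2n = 3m + d with d in {0,1,2},
   and <n> = <m> d.  Since m < n for n >= 1, recursion with fuel n suffices. *)
Fixpoint digsum32_fuel (fuel n : nat) : nat :=
  match fuel with
  | O => O
  | S f =>
      match n with
      | O => O
      | S _ => digsum32_fuel f ((2 * n) / 3) + (2 * n) mod 3
      end
  end.

Definition digsum32 (n : nat) : nat := digsum32_fuel n n.

Definition t32 (n : nat) : nat := (digsum32 n) mod 2.

Definition C32 (n c : nat) (k : Z) (N : nat) : nat :=
  length (List.filter
    (fun i => Nat.eqb (t32 i) c &&
              Z.eqb (Z.modulo (Z.of_nat i) (2 ^ Z.of_nat n)) (Z.modulo k (2 ^ Z.of_nat n)))%bool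
    (List.seq 0 N)).

(* Main.v *)
Require Import Defs.
From Stdlib Require Import Arith ZArith Reals.
From Coquelicot Require Import Coquelicot.
From Stdlib Require Import Lia List Lra.
Ltac mlia := zify; rewrite ?Nat2Z.inj_mod, ?Nat2Z.inj_div in *; zify; Z.div_mod_to_equations; lia.

Module Part1.
Local Open Scope nat_scope.

Lemma fuel_eq : forall f f' n, n <= f -> n <= f' -> digsum32_fuel f n = digsum32_fuel f' n.
Proof.
  induction f as [|f IH]; intros f' n H H'.
  - assert (n = 0) by lia. subst. destruct f'; reflexivity.
  - destruct f' as [|f']. { assert (n=0) by lia; subst; reflexivity. }
    destruct n as [|n']; [reflexivity|].
    cbn [digsum32_fuel]. f_equal. apply IH; mlia.
Qed.

Lemma digsum_rec : forall n, 0 < n -> digsum32 n = digsum32 ((2*n)/3) + (2*n) mod 3.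
Proof.
  intros n Hn. unfold digsum32. destruct n as [|n']; [lia|].
  cbn [digsum32_fuel]. f_equal. apply fuel_eq; mlia.
Qed.

Lemma ds3 : forall m, digsum32 (3*m) = digsum32 (2*m).
Proof.
  intros m. destruct m as [|m]; [reflexivity|].
  rewrite digsum_rec by lia.
  replace (2*(3*S m)/3) with (2*S m) by mlia.
  replace (2*(3*S m) mod 3) with 0 by mlia. lia.
Qed.

Lemma ds31 : forall m, digsum32 (3*m+1) = digsum32 (2*m) + 2.
Proof.
  intros m. rewrite digsum_rec by lia.
  replace (2*(3*m+1)/3) with (2*m) by mlia.
  replace (2*(3*m+1) mod 3) with 2 by mlia. lia.
Qed.

Lemma ds32 : forall m, digsum32 (3*m+2) = digsum32 (2*m+1) + 1.
Proof.
  intros m. rewrite digsum_rec by lia.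
  replace (2*(3*m+2)/3) with (2*m+1) by mlia.
  replace (2*(3*m+2) mod 3) with 1 by mlia. lia.
Qed.

Definition x (i : nat) : Z := (1 - 2 * Z.of_nat (t32 i))%Z.

Lemma t32_lt : forall i, t32 i < 2.
Proof. intros; unfold t32; apply Nat.mod_upper_bound; lia. Qed.

Lemma x3 : forall m, x (3*m) = x (2*m).
Proof. intros; unfold x, t32; rewrite ds3; reflexivity. Qed.
Lemma x31 : forall m, x (3*m+1) = x (2*m).
Proof. intros; unfold x, t32; rewrite ds31. f_equal. f_equal. f_equal. mlia. Qed.
Lemma x32 : forall m, x (3*m+2) = (- x (2*m+1))%Z.
Proof. intros; unfold x, t32; rewrite ds32.
  assert (H: (digsum32 (2*m+1) + 1) mod 2 = 1 - digsum32 (2*m+1) mod 2) by mlia.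
  rewrite H. assert (digsum32 (2*m+1) mod 2 < 2) by (apply Nat.mod_upper_bound; lia). lia. Qed.
Lemma x_sq : forall i, (x i * x i = 1)%Z.
Proof. intros; unfold x. pose proof (t32_lt i). destruct (t32 i) as [|[|]]; simpl; lia. Qed.

End Part1.
Import Part1.

Module Part2.
Local Open Scope Z_scope.

Fixpoint zsum (f : nat -> Z) (n : nat) : Z :=
  match n with O => 0 | S n => zsum f n + f n end.

Lemma zsum_ext : forall f g n, (forall i, (i < n)%nat -> f i = g i) -> zsum f n = zsum g n.
Proof. intros f g n; induction n; intros H; simpl; [reflexivity|].
  rewrite IHn by (intros; apply H; lia). rewrite H by lia. reflexivity. Qed.

Lemma zsum_add : forall f g n, zsum (fun i => f i + g i) n = zsum f n + zsum g n.
Proof. intros; induction n; simpl; lia. Qed.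
Lemma zsum_scal : forall c f n, zsum (fun i => c * f i) n = c * zsum f n.
Proof. intros; induction n; simpl; [lia|]. rewrite IHn. ring. Qed.
Lemma zsum_split : forall f a b, zsum f (a + b) = zsum f a + zsum (fun i => f (a + i)%nat) b.
Proof. intros f a b; induction b; simpl.
  - rewrite Nat.add_0_r; lia.
  - rewrite Nat.add_succ_r; simpl; rewrite IHb; lia. Qed.
Lemma zsum_double : forall f P, zsum f (2*P) = zsum (fun j => f (2*j)%nat + f (2*j+1)%nat) P.
Proof. intros f P; induction P; [reflexivity|].
  replace (2 * S P)%nat with (S (S (2*P))) by lia. cbn [zsum]. rewrite IHP.
  replace (S (2*P)) with (2*P+1)%nat by lia. lia. Qed.
Lemma zsum_triple : forall f P, zsum f (3*P) = zsum (fun j => f (3*j)%nat + f (3*j+1)%nat + f (3*j+2)%nat) P.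
Proof. intros f P; induction P; [reflexivity|].
  replace (3 * S P)%nat with (S (S (S (3*P)))) by lia. cbn [zsum]. rewrite IHP.
  replace (S (3*P)) with (3*P+1)%nat by lia.
  replace (S (3*P+1)) with (3*P+2)%nat by lia. lia. Qed.
Lemma zsum_le : forall f g n, (forall i, (i < n)%nat -> f i <= g i) -> zsum f n <= zsum g n.
Proof. intros f g n; induction n; intros H; simpl; [lia|].
  specialize (IHn (fun i Hi => H i ltac:(lia))). specialize (H n ltac:(lia)). lia. Qed.
Lemma zsum_const : forall c n, zsum (fun _ => c) n = Z.of_nat n * c.
Proof. intros; induction n; cbn [zsum]; [lia|]. rewrite IHn, Nat2Z.inj_succ. ring. Qed.

Definition periodic (g : nat -> Z) (P : nat) := forall i, g (i + P)%nat = g i.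

Lemma periodic_mult : forall g P q i, periodic g P -> g (i + q * P)%nat = g i.
Proof. intros g P q i H; induction q; simpl.
  - rewrite Nat.add_0_r; reflexivity.
  - replace (i + (P + q*P))%nat with ((i + q*P) + P)%nat by lia. rewrite H. exact IHq. Qed.

Lemma zsum_shift1 : forall g P, periodic g P -> zsum (fun r => g (r + 1)%nat) P = zsum g P.
Proof. intros g P H.
  assert (E: forall n, zsum (fun r => g (r+1)%nat) n = zsum g n - g O + g n).
  { induction n; simpl; [lia|]. rewrite IHn. replace (n+1)%nat with (S n) by lia. lia. }
  rewrite E. specialize (H O). simpl in H. rewrite H. lia. Qed.

Lemma periodic_shift : forall g P s, periodic g P -> periodic (fun r => g (r + s)%nat) P.
Proof. intros g P s H i. simpl. replace (i + P + s)%nat with (i + s + P)%nat by lia. apply H. Qed.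

Lemma zsum_shift : forall s g P, periodic g P -> zsum (fun r => g (r + s)%nat) P = zsum g P.
Proof. induction s; intros g P H.
  - apply zsum_ext; intros; rewrite Nat.add_0_r; reflexivity.
  - rewrite <- (IHs g P H).
    rewrite <- (zsum_shift1 (fun r => g (r + s)%nat) P (periodic_shift g P s H)).
    apply zsum_ext; intros; f_equal; lia. Qed.

Lemma zsum_periods : forall g P q, periodic g P -> zsum g (q * P) = Z.of_nat q * zsum g P.
Proof. intros g P q H; induction q.
  - simpl; lia.
  - replace (S q * P)%nat with (q*P + P)%nat by lia. rewrite zsum_split, IHq.
    assert (E: zsum (fun i => g (q*P+i)%nat) P = zsum g P).
    { apply zsum_ext. intros i _. replace (q*P+i)%nat with (i + q*P)%nat by lia.
      apply periodic_mult; exact H. }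
    rewrite E, Nat2Z.inj_succ. ring. Qed.

Lemma zsum_3j : forall g P, periodic g P -> (P mod 3 <> 0)%nat ->
  zsum (fun j => g (3*j)%nat) P = zsum g P.
Proof. intros g P H H3.
  set (h := fun i => if (i mod 3 =? 0)%nat then g i else 0).
  assert (A: zsum h (3*P) = zsum (fun j => g (3*j)%nat) P).
  { rewrite zsum_triple. apply zsum_ext. intros j _. unfold h.
    replace ((3*j) mod 3)%nat with O by mlia.
    replace ((3*j+1) mod 3)%nat with 1%nat by mlia.
    replace ((3*j+2) mod 3)%nat with 2%nat by mlia. simpl. lia. }
  rewrite <- A. replace (3*P)%nat with (P + (P + P))%nat by lia.
  rewrite !zsum_split. rewrite <- !zsum_add. apply zsum_ext. intros r _. unfold h.
  assert (E1: g (P + r)%nat = g r) by (rewrite Nat.add_comm; apply H).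
  assert (E2: g (P + (P + r))%nat = g r) by (rewrite <- (H r), <- (H (r+P)%nat); f_equal; lia).
  rewrite E1, E2.
  destruct (Nat.eqb_spec (r mod 3) 0); destruct (Nat.eqb_spec ((P+r) mod 3) 0);
  destruct (Nat.eqb_spec ((P+(P+r)) mod 3) 0); try (exfalso; mlia); lia. Qed.

End Part2.
Import Part2.

Module Part3.
Local Open Scope Z_scope.

Definition step (nu : nat -> Z) (i : nat) : Z :=
  if Nat.even i then nu (3*(i/2))%nat + nu (3*(i/2)+1)%nat else - nu (3*(i/2)+2)%nat.

Lemma step_even : forall nu j, step nu (2*j) = nu (3*j)%nat + nu (3*j+1)%nat.
Proof. intros. unfold step. replace (Nat.even (2*j)) with true by (rewrite Nat.even_mul; reflexivity).
  replace (2*j/2)%nat with j by mlia. reflexivity. Qed.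
Lemma step_odd : forall nu j, step nu (2*j+1) = - nu (3*j+2)%nat.
Proof. intros. unfold step. replace (Nat.even (2*j+1)) with false by (rewrite Nat.even_add, Nat.even_mul; reflexivity).
  replace ((2*j+1)/2)%nat with j by mlia. reflexivity. Qed.

Definition W (nu : nat -> Z) (N : nat) : Z := zsum (fun i => nu i * x i) N.

Lemma W_step : forall nu M, W nu (3*M) = W (step nu) (2*M).
Proof. intros. unfold W. rewrite zsum_triple, zsum_double. apply zsum_ext. intros j _.
  rewrite step_even, step_odd, x3, x31, x32. ring. Qed.

Lemma periodic_step : forall nu P, periodic nu P -> periodic (step nu) (2*P).
Proof. intros nu P H i. unfold step.
  replace (Nat.even (i + 2*P)) with (Nat.even i) by (rewrite Nat.even_add, Nat.even_mul; destruct (Nat.even i); reflexivity).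
  replace ((i + 2*P)/2)%nat with (i/2 + P)%nat by mlia.
  replace (3*(i/2+P))%nat with (3*(i/2) + 3*P)%nat by lia.
  replace (3*(i/2)+3*P+1)%nat with (3*(i/2)+1 + 3*P)%nat by lia.
  replace (3*(i/2)+3*P+2)%nat with (3*(i/2)+2 + 3*P)%nat by lia.
  rewrite !periodic_mult by exact H. reflexivity. Qed.

Definition En (nu : nat -> Z) (P : nat) := zsum (fun r => nu r * nu r) P.
Definition Rc (nu : nat -> Z) (P h : nat) := zsum (fun r => nu r * nu (r + h)%nat) P.

Lemma per_prod : forall nu P a b, periodic nu P -> periodic (fun r => nu (r + a)%nat * nu (r + b)%nat) P.
Proof. intros nu P a b H i. simpl.
  replace (i + P + a)%nat with (i + a + P)%nat by lia.
  replace (i + P + b)%nat with (i + b + P)%nat by lia. rewrite !H. reflexivity. Qed.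

Lemma sum3 : forall nu P a b, periodic nu P -> (P mod 3 <> 0)%nat ->
  zsum (fun j => nu (3*j+a)%nat * nu (3*j+b)%nat) P = zsum (fun r => nu (r+a)%nat * nu (r+b)%nat) P.
Proof. intros nu P a b H H3.
  rewrite <- (zsum_3j (fun r => nu (r + a)%nat * nu (r + b)%nat) P (per_prod nu P a b H) H3).
  reflexivity. Qed.

Lemma Rc_shift : forall nu P a h, periodic nu P ->
  zsum (fun r => nu (r+a)%nat * nu (r+a+h)%nat) P = Rc nu P h.
Proof. intros nu P a h H. unfold Rc.
  rewrite <- (zsum_shift a (fun r => nu r * nu (r + h)%nat) P).
  - apply zsum_ext; intros; reflexivity.
  - intros i; simpl. replace (i+P+h)%nat with (i+h+P)%nat by lia. rewrite !H; reflexivity. Qed.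

Lemma En_step : forall nu P, periodic nu P -> (P mod 3 <> 0)%nat ->
  En (step nu) (2*P) = 3 * En nu P + 2 * Rc nu P 1.
Proof. intros nu P H H3. unfold En. rewrite zsum_double.
  rewrite (zsum_ext _ (fun j => (nu (3*j+0)%nat * nu (3*j+0)%nat + nu (3*j+1)%nat * nu (3*j+1)%nat
     + nu (3*j+2)%nat * nu (3*j+2)%nat) + 2 * (nu (3*j+0)%nat * nu (3*j+1)%nat))).
  2:{ intros j _. rewrite step_even, step_odd. rewrite Nat.add_0_r. ring. }
  rewrite zsum_add, zsum_scal, !zsum_add, !sum3 by assumption.
  pose proof (Rc_shift nu P 0 0 H) as A0. pose proof (Rc_shift nu P 1 0 H) as A1.
  pose proof (Rc_shift nu P 2 0 H) as A2. pose proof (Rc_shift nu P 0 1 H) as B.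
  unfold Rc in *.
  assert (Z0: zsum (fun r => nu r * nu r) P = zsum (fun r => nu (r + 0)%nat * nu (r + 0 + 0)%nat) P)
    by (apply zsum_ext; intros; rewrite !Nat.add_0_r; reflexivity).
  rewrite (zsum_ext (fun r => nu (r + 1)%nat * nu (r + 1)%nat) (fun r => nu (r + 1)%nat * nu (r + 1 + 0)%nat)) by (intros; rewrite !Nat.add_0_r; reflexivity).
  rewrite (zsum_ext (fun r => nu (r + 2)%nat * nu (r + 2)%nat) (fun r => nu (r + 2)%nat * nu (r + 2 + 0)%nat)) by (intros; rewrite !Nat.add_0_r; reflexivity).
  rewrite (zsum_ext (fun r => nu (r + 0)%nat * nu (r + 0)%nat) (fun r => nu (r + 0)%nat * nu (r + 0 + 0)%nat)) by (intros; rewrite !Nat.add_0_r; reflexivity).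
  rewrite (zsum_ext (fun r => nu (r + 0)%nat * nu (r + 1)%nat) (fun r => nu (r + 0)%nat * nu (r + 0 + 1)%nat)) by (intros; rewrite !Nat.add_0_r; reflexivity).
  rewrite A0, A1, A2, B.
  rewrite (zsum_ext (fun r => nu r * nu (r+0)%nat) (fun r => nu r * nu r)) by (intros; rewrite !Nat.add_0_r; reflexivity).
  ring. Qed.

Lemma sum3R : forall nu P a h, periodic nu P -> (P mod 3 <> 0)%nat ->
  zsum (fun j => nu (3*j+a)%nat * nu (3*j+a+h)%nat) P = Rc nu P h.
Proof. intros nu P a h H H3.
  rewrite (zsum_ext _ (fun j => nu (3*j+a)%nat * nu (3*j+(a+h))%nat)) by (intros; rewrite Nat.add_assoc; reflexivity).
  rewrite sum3 by assumption.
  rewrite <- (Rc_shift nu P a h H). apply zsum_ext; intros; rewrite Nat.add_assoc; reflexivity. Qed.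

Lemma Rc_step : forall nu P, periodic nu P -> (P mod 3 <> 0)%nat ->
  Rc (step nu) (2*P) 1 = - 2 * Rc nu P 1 - 2 * Rc nu P 2.
Proof. intros nu P H H3. unfold Rc at 1. rewrite zsum_double.
  rewrite (zsum_ext _ (fun j => (-1) * (nu (3*j+0)%nat * nu (3*j+0+2)%nat + nu (3*j+1)%nat * nu (3*j+1+1)%nat
      + nu (3*j+2)%nat * nu (3*j+2+1)%nat + nu (3*j+2)%nat * nu (3*j+2+2)%nat))).
  2:{ intros j _. replace (2*j+1+1)%nat with (2*(j+1))%nat by lia.
      rewrite step_even, step_odd, step_even.
      replace (3*(j+1)+1)%nat with (3*j+2+2)%nat by lia.
      replace (3*(j+1))%nat with (3*j+2+1)%nat by lia.
      replace (3*j+0)%nat with (3*j)%nat by lia.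
      replace (3*j+0+2)%nat with (3*j+2)%nat by lia.
      replace (3*j+1+1)%nat with (3*j+2)%nat by lia. ring. }

  rewrite zsum_scal, !zsum_add, !sum3R by assumption. ring. Qed.

Lemma Rc_bound : forall nu P h, periodic nu P -> -En nu P <= Rc nu P h <= En nu P.
Proof. intros nu P h H.
  assert (S: zsum (fun r => nu (r+h)%nat * nu (r+h)%nat) P = En nu P).
  { unfold En. apply (zsum_shift h (fun r => nu r * nu r)). intros i; simpl; rewrite H; reflexivity. }
  unfold Rc. split.
  - assert (2 * (- En nu P) <= 2 * zsum (fun r => nu r * nu (r + h)%nat) P); [|lia].
    rewrite <- zsum_scal. unfold En at 1.
    replace (2 * - zsum (fun r => nu r * nu r) P) with
      ((-1) * zsum (fun r => nu r * nu r) P + (-1) * zsum (fun r => nu (r+h)%nat * nu (r+h)%nat) P) by (rewrite S; unfold En; ring).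
    rewrite <- !zsum_scal, <- zsum_add. apply zsum_le. intros i _.
    pose proof (Z.square_nonneg (nu i + nu (i+h)%nat)). nia.
  - assert (2 * zsum (fun r => nu r * nu (r + h)%nat) P <= 2 * En nu P); [|lia].
    rewrite <- zsum_scal. unfold En at 1.
    replace (2 * zsum (fun r => nu r * nu r) P) with
      (zsum (fun r => nu r * nu r) P + zsum (fun r => nu (r+h)%nat * nu (r+h)%nat) P) by (rewrite S; unfold En; ring).
    rewrite <- zsum_add. apply zsum_le. intros i _.
    pose proof (Z.square_nonneg (nu i - nu (i+h)%nat)). nia. Qed.

Lemma En_step2 : forall nu P, periodic nu P -> (P mod 3 <> 0)%nat -> ((2*P) mod 3 <> 0)%nat ->
  En (step (step nu)) (2*(2*P)) <= 15 * En nu P.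
Proof. intros nu P H H3 H3'.
  rewrite En_step by (try apply periodic_step; assumption).
  rewrite En_step, Rc_step by assumption.
  pose proof (Rc_bound nu P 1 H). pose proof (Rc_bound nu P 2 H). lia. Qed.

End Part3.
Import Part3.

Module Part4.
Local Open Scope Z_scope.

Lemma x_abs : forall i, x i = 1 \/ x i = -1.
Proof. intros; unfold x. pose proof (t32_lt i). destruct (t32 i) as [|[|]]; simpl; lia. Qed.

Lemma zsum_abs_le : forall f B n, (forall i, Z.abs (f i) <= B) -> Z.abs (zsum f n) <= Z.of_nat n * B.
Proof. intros f B n H; induction n; cbn [zsum]; [lia|]. specialize (H n).
  rewrite Nat2Z.inj_succ. lia. Qed.

Lemma W_rem : forall nu B N, (forall i, Z.abs (nu i) <= B) ->
  Z.abs (W nu N - W (step nu) (2*(N/3))) <= 2 * B.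
Proof. intros nu B N H. rewrite <- W_step.
  pose proof (Nat.div_mod_eq N 3) as E.
  unfold W. rewrite E at 1. rewrite zsum_split.
  assert (Hm: (N mod 3 <= 2)%nat) by (pose proof (Nat.mod_upper_bound N 3); lia).
  assert (Z.abs (zsum (fun i => nu (3 * (N / 3) + i)%nat * x (3 * (N / 3) + i)%nat) (N mod 3)) <= Z.of_nat (N mod 3) * B).
  { apply zsum_abs_le. intros i. specialize (H (3*(N/3)+i)%nat). destruct (x_abs (3*(N/3)+i)%nat) as [-> | ->]; lia. }
  assert (0 <= B) by (specialize (H O); lia). nia. Qed.

Lemma step_bound : forall nu B, (forall i, Z.abs (nu i) <= B) -> forall i, Z.abs (step nu i) <= 2 * B.
Proof. intros nu B H i. unfold step. destruct (Nat.even i).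
  - pose proof (H (3*(i/2))%nat). pose proof (H (3*(i/2)+1)%nat). lia.
  - pose proof (H (3*(i/2)+2)%nat). assert (0 <= B) by (specialize (H O); lia). lia. Qed.

Fixpoint iterstep (L : nat) (nu : nat -> Z) : nat -> Z :=
  match L with O => nu | S L => iterstep L (step nu) end.
Fixpoint Nseq (L N : nat) : nat :=
  match L with O => N | S L => Nseq L (2 * (N / 3)) end.

Lemma W_iter : forall L nu B N, (forall i, Z.abs (nu i) <= B) ->
  Z.abs (W nu N - W (iterstep L nu) (Nseq L N)) <= 2 * B * (2 ^ Z.of_nat L - 1).
Proof. induction L; intros nu B N H; cbn [iterstep Nseq].
  - simpl. lia.
  - pose proof (W_rem nu B N H).
    pose proof (IHL (step nu) (2*B) (2*(N/3))%nat (step_bound nu B H)).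
    rewrite Nat2Z.inj_succ, Z.pow_succ_r by lia.
    assert (0 <= B) by (specialize (H O); lia).
    assert (1 <= 2 ^ Z.of_nat L) by (pose proof (Z.pow_pos_nonneg 2 (Z.of_nat L)); assert (0 < 2 ^ Z.of_nat L) by (apply Z.pow_pos_nonneg; lia); lia).
    nia. Qed.

Lemma Nseq_bound : forall L N, (3 ^ L * Nseq L N <= 2 ^ L * N)%nat.
Proof. induction L; intros N; cbn [Nseq]; [simpl; lia|].
  specialize (IHL (2*(N/3))%nat). rewrite !Nat.pow_succ_r'.
  assert (3 * (N/3) <= N)%nat by (apply Nat.Div0.mul_div_le). nia. Qed.

Lemma iterstep_periodic : forall L nu P, periodic nu P -> periodic (iterstep L nu) (2^L * P).
Proof. induction L; intros nu P H; cbn [iterstep].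
  - simpl. rewrite Nat.add_0_r. exact H.
  - replace (2^(S L) * P)%nat with (2^L*(2*P))%nat by (rewrite Nat.pow_succ_r'; ring). apply IHL. apply periodic_step. exact H. Qed.

Lemma pow2_mod3 : forall a, ((2 ^ a) mod 3 <> 0)%nat.
Proof. induction a; [simpl; discriminate|]. rewrite Nat.pow_succ_r'.
  remember (2^a)%nat as p. clear Heqp. mlia. Qed.

Lemma En_iter : forall l nu m, periodic nu (2^m) ->
  En (iterstep (2*l) nu) (4^l * 2^m) <= 15 ^ Z.of_nat l * En nu (2^m).
Proof. induction l; intros nu m H.
  - replace (2*0)%nat with O by lia. cbn [iterstep]. rewrite Nat.pow_0_r, Nat.mul_1_l. change (Z.of_nat 0) with 0%Z. rewrite Z.pow_0_r. lia.
  - replace (2 * S l)%nat with (S (S (2*l))) by lia. cbn [iterstep].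
    replace (4 ^ S l * 2 ^ m)%nat with (4 ^ l * 2 ^ (S (S m)))%nat by (rewrite !Nat.pow_succ_r'; ring).
    assert (Hp: periodic (step (step nu)) (2 ^ S (S m))).
    { rewrite !Nat.pow_succ_r'. apply periodic_step. apply periodic_step. exact H. }
    specialize (IHl _ _ Hp).
    pose proof (En_step2 nu (2^m) H (pow2_mod3 m)) as E2.
    replace (2 * 2^m)%nat with (2 ^ S m)%nat in E2 by (rewrite Nat.pow_succ_r'; ring).
    specialize (E2 (pow2_mod3 (S m))).
    replace (2 * 2^S m)%nat with (2 ^ S (S m))%nat in E2 by (rewrite (Nat.pow_succ_r' 2 (S m)); ring).
    rewrite Nat2Z.inj_succ, Z.pow_succ_r by lia.
    assert (0 <= 15 ^ Z.of_nat l) by (apply Z.pow_nonneg; lia).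
    nia. Qed.

Lemma CS : forall nu N, W nu N * W nu N <= Z.of_nat N * zsum (fun i => nu i * nu i) N.
Proof. intros nu N. unfold W. induction N; cbn [zsum]; [lia|].
  set (S0 := zsum (fun i => nu i * x i) N) in *.
  set (Q := zsum (fun i => nu i * nu i) N) in *.
  rewrite Nat2Z.inj_succ.
  assert (Hq: 0 <= Q) by (unfold Q; clear; induction N; cbn [zsum]; nia).
  destruct (x_abs N) as [-> | ->].
  - destruct N as [|N'].
    + unfold S0, Q; cbn [zsum]. change (Z.of_nat 0) with 0%Z. nia.
    + assert (Z.of_nat (S N') * (2 * S0 * nu (S N')) <= S0*S0 + Z.of_nat (S N') * Z.of_nat (S N') * (nu (S N') * nu (S N'))) by
        (pose proof (Z.square_nonneg (S0 - Z.of_nat (S N') * nu (S N'))); nia).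
      assert (0 < Z.of_nat (S N')) by lia. nia.
  - destruct N as [|N'].
    + unfold S0, Q; cbn [zsum]. change (Z.of_nat 0) with 0%Z. nia.
    + assert (Z.of_nat (S N') * (- 2 * S0 * nu (S N')) <= S0*S0 + Z.of_nat (S N') * Z.of_nat (S N') * (nu (S N') * nu (S N'))) by
        (pose proof (Z.square_nonneg (S0 + Z.of_nat (S N') * nu (S N'))); nia).
      assert (0 < Z.of_nat (S N') ) by lia. nia. Qed.

End Part4.
Import Part4.

Module Part5.
Local Open Scope Z_scope.

Lemma zsum_nonneg : forall g n, (forall i, 0 <= g i) -> 0 <= zsum g n.
Proof. intros g n H; induction n; cbn [zsum]; [lia|]. specialize (H n); lia. Qed.

Lemma zsum_mono : forall g a b, (forall i, 0 <= g i) -> (a <= b)%nat -> zsum g a <= zsum g b.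
Proof. intros g a b H Hab. replace b with (a + (b - a))%nat by lia. rewrite zsum_split.
  pose proof (zsum_nonneg (fun i => g (a+i)%nat) (b-a) (fun i => H _)). lia. Qed.

Lemma per_upper : forall g P N, (forall i, 0 <= g i) -> periodic g P -> (0 < P)%nat ->
  Z.of_nat P * zsum g N <= (Z.of_nat N + Z.of_nat P) * zsum g P.
Proof. intros g P N H Hp HP.
  set (q := (N / P + 1)%nat).
  assert (HN: (N <= q * P)%nat) by (unfold q; mlia).
  assert (Hq: (q * P <= N + P)%nat) by (unfold q; mlia).
  pose proof (zsum_mono g _ _ H HN). rewrite zsum_periods in H0 by exact Hp.
  pose proof (zsum_nonneg g P H). pose proof (zsum_nonneg g N H).
  assert (Z.of_nat q * Z.of_nat P <= Z.of_nat N + Z.of_nat P) by lia. nia. Qed.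

Lemma per_lower : forall g P N, (forall i, 0 <= g i) -> periodic g P -> (0 < P)%nat ->
  (Z.of_nat N - Z.of_nat P) * zsum g P <= Z.of_nat P * zsum g N.
Proof. intros g P N H Hp HP.
  set (q := (N / P)%nat).
  assert (HN: (q * P <= N)%nat) by (unfold q; mlia).
  assert (Hq: (N <= q * P + P)%nat) by (unfold q; mlia).
  pose proof (zsum_mono g _ _ H HN). rewrite zsum_periods in H0 by exact Hp.
  pose proof (zsum_nonneg g P H).
  assert (Z.of_nat N - Z.of_nat P <= Z.of_nat q * Z.of_nat P) by lia. nia. Qed.

Definition nu0 (P k' : nat) (i : nat) : Z := if (i mod P =? k')%nat then 1 else 0.

Lemma nu0_periodic : forall P k', (0 < P)%nat -> periodic (nu0 P k') P.
Proof. intros P k' HP i. unfold nu0. replace ((i + P) mod P)%nat with (i mod P)%nat. reflexivity.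
  rewrite <- (Nat.Div0.add_mod_idemp_r i P P), Nat.Div0.mod_same, Nat.add_0_r. reflexivity. Qed.

Lemma nu0_sum : forall P k', (k' < P)%nat -> zsum (nu0 P k') P = 1.
Proof. intros P k' Hk.
  assert (A: forall m, (m <= P)%nat -> zsum (nu0 P k') m = if (k' <? m)%nat then 1 else 0).
  { induction m; intros Hm; cbn [zsum]; [reflexivity|]. rewrite IHm by lia. unfold nu0.
    rewrite Nat.mod_small by lia.
    destruct (Nat.ltb_spec k' m); destruct (Nat.ltb_spec k' (S m)); destruct (Nat.eqb_spec m k'); lia. }
  rewrite A by lia. destruct (Nat.ltb_spec k' P); lia. Qed.

Lemma nu0_bound : forall P k' i, Z.abs (nu0 P k' i) <= 1.
Proof. intros; unfold nu0; destruct (_ =? _)%nat; simpl; lia. Qed.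

Lemma nu0_En : forall P k', En (nu0 P k') P <= Z.of_nat P.
Proof. intros. unfold En. rewrite <- (Z.mul_1_r (Z.of_nat P)). rewrite <- zsum_const.
  apply zsum_le. intros i _. unfold nu0; destruct (_ =? _)%nat; lia. Qed.

Lemma len_filter : forall (p : nat -> bool) N,
  Z.of_nat (length (filter p (seq 0 N))) = zsum (fun i => if p i then 1 else 0) N.
Proof. intros p N; induction N; [reflexivity|].
  rewrite seq_S, filter_app, length_app, Nat2Z.inj_add, IHN. cbn [zsum].
  simpl. destruct (p N); simpl; lia. Qed.

Lemma C32_eq : forall n c k N, (c <= 1)%nat ->
  2 * Z.of_nat (C32 n c k N) =
  zsum (nu0 (2^n) (Z.to_nat (k mod 2 ^ Z.of_nat n))) N
  + (1 - 2 * Z.of_nat c) * W (nu0 (2^n) (Z.to_nat (k mod 2 ^ Z.of_nat n))) N.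
Proof. intros n c k N Hc. unfold C32. rewrite len_filter. unfold W.
  rewrite <- zsum_scal, <- zsum_scal, <- zsum_add. apply zsum_ext. intros i _.
  set (k' := Z.to_nat (k mod 2 ^ Z.of_nat n)).
  assert (Hpos: 0 < 2 ^ Z.of_nat n) by (apply Z.pow_pos_nonneg; lia).
  assert (Hk: Z.of_nat k' = k mod 2 ^ Z.of_nat n).
  { unfold k'. rewrite Z2Nat.id; [reflexivity|]. apply Z.mod_pos_bound; lia. }
  assert (Hi: Z.of_nat i mod 2 ^ Z.of_nat n = Z.of_nat (i mod 2^n)).
  { rewrite Nat2Z.inj_mod, Nat2Z.inj_pow. reflexivity. }
  rewrite Hi, <- Hk.
  replace (Z.of_nat (i mod 2 ^ n) =? Z.of_nat k')%Z with (i mod 2^n =? k')%nat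
    by (destruct (Nat.eqb_spec (i mod 2^n) k'); destruct (Z.eqb_spec (Z.of_nat (i mod 2^n)) (Z.of_nat k')); lia).
  unfold nu0, x. pose proof (t32_lt i).
  destruct (i mod 2^n =? k')%nat; destruct (Nat.eqb_spec (t32 i) c); simpl;
  destruct c as [|[|]]; destruct (t32 i) as [|[|]]; simpl in *; lia. Qed.

End Part5.
Import Part5.

Module Part6.
Local Open Scope Z_scope.

Lemma mainZ : forall n k' l N, (k' < 2^n)%nat ->
  Z.abs (W (nu0 (2^n) k') N - W (iterstep (2*l) (nu0 (2^n) k')) (Nseq (2*l) N)) <= 2 * 4 ^ Z.of_nat l
  /\ Z.of_nat (4^l) * (W (iterstep (2*l) (nu0 (2^n) k')) (Nseq (2*l) N))^2
       <= Z.of_nat (Nseq (2*l) N) * (Z.of_nat (Nseq (2*l) N) + Z.of_nat (4^l * 2^n)) * 15 ^ Z.of_nat l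
  /\ (9^l * Nseq (2*l) N <= 4^l * N)%nat.
Proof. intros n k' l N Hk.
  assert (HP: (0 < 2^n)%nat) by (apply Nat.neq_0_lt_0, Nat.pow_nonzero; lia).
  set (nu := nu0 (2^n) k').
  assert (Hper: periodic nu (2^n)) by (apply nu0_periodic; exact HP).
  assert (P4eq: (2 ^ (2*l) = 4 ^ l)%nat) by (rewrite Nat.pow_mul_r; reflexivity).
  split; [|split].
  - pose proof (W_iter (2*l) nu 1 N (nu0_bound _ _)).
    replace (2 ^ Z.of_nat (2*l)) with (4 ^ Z.of_nat l) in H.
    2:{ rewrite Nat2Z.inj_mul, Z.pow_mul_r by lia. reflexivity. }
    assert (0 < 4 ^ Z.of_nat l) by (apply Z.pow_pos_nonneg; lia). lia.
  - set (nuL := iterstep (2*l) nu). set (NL := Nseq (2*l) N).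
    assert (HperL: periodic nuL (4^l * 2^n)).
    { unfold nuL. rewrite <- P4eq. apply iterstep_periodic. exact Hper. }
    assert (HEL: En nuL (4^l * 2^n) <= 15 ^ Z.of_nat l * Z.of_nat (2^n)).
    { unfold nuL. pose proof (En_iter l nu n Hper). pose proof (nu0_En (2^n) k').
      assert (0 <= 15 ^ Z.of_nat l) by (apply Z.pow_nonneg; lia). unfold nu in *. nia. }
    pose proof (CS nuL NL) as Hcs.
    assert (Hsq: forall i, 0 <= nuL i * nuL i) by (intros; nia).
    assert (HPL: (0 < 4^l * 2^n)%nat) by (apply Nat.mul_pos_pos; [apply Nat.neq_0_lt_0, Nat.pow_nonzero; lia | exact HP]).
    assert (Hpq: periodic (fun i => nuL i * nuL i) (4^l * 2^n)).
    { intros i; simpl; rewrite HperL; reflexivity. }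
    pose proof (per_upper (fun i => nuL i * nuL i) (4^l*2^n) NL Hsq Hpq HPL) as Hu.
    fold (En nuL (4^l*2^n)) in Hu.
    rewrite Nat2Z.inj_mul in *.
    set (A := Z.of_nat (4^l)) in *. set (B := Z.of_nat (2^n)) in *.
    set (Q := zsum (fun i => nuL i * nuL i) NL) in *.
    set (w := W nuL NL) in *.
    assert (0 < A) by (unfold A; pose proof (Nat.pow_nonzero 4 l); lia).
    assert (0 < B) by (unfold B; lia).
    assert (0 <= Q) by (apply zsum_nonneg; exact Hsq).
    assert (0 <= En nuL (4^l*2^n)) by (apply zsum_nonneg; exact Hsq).
    assert (0 <= 15 ^ Z.of_nat l) by (apply Z.pow_nonneg; lia).
    (* A*B*w^2 <= A*B*NL*Q <= NL*(NL + A B) * En <= NL (NL + AB) 15^l B *)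
    assert (A * B * w^2 <= Z.of_nat NL * (Z.of_nat NL + A * B) * 15 ^ Z.of_nat l * B).
    { assert (A*B*(w^2) <= Z.of_nat NL * (A * B * Q)) by nia.
      assert (A*B*Q <= (Z.of_nat NL + A*B) * (15 ^ Z.of_nat l * B)) by nia.
      nia. }
    assert (B * (A * w^2) <= B * (Z.of_nat NL * (Z.of_nat NL + A * B) * 15 ^ Z.of_nat l)) by nia.
    apply Z.mul_le_mono_pos_l in H5; [exact H5|lia].
  - pose proof (Nseq_bound (2*l) N). rewrite P4eq in H.
    replace (3^(2*l))%nat with (9^l)%nat in H by (rewrite Nat.pow_mul_r; reflexivity). exact H.
Qed.

End Part6.
Import Part6.

Module Part7.
Local Open Scope R_scope.

Lemma nat_large : forall X : R, exists N1 : nat, forall N, (N >= N1)%nat -> X <= INR N.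
Proof. intros X. destruct (archimed (Rabs X)) as [H1 H2].
  assert (0 <= Rabs X) by apply Rabs_pos.
  assert (Hz: (0 <= up (Rabs X))%Z) by (apply le_IZR; lra).
  exists (Z.to_nat (up (Rabs X))). intros N HN.
  apply le_INR in HN. rewrite INR_IZR_INZ, Z2Nat.id in HN by exact Hz.
  pose proof (Rle_abs X). lra. Qed.

Lemma div_nonneg : forall x y, 0 <= x -> 0 < y -> 0 <= x / y.
Proof. intros. unfold Rdiv. apply Rmult_le_pos; [lra|]. left; apply Rinv_0_lt_compat; lra. Qed.

Lemma Wsmall : forall n k', (k' < 2^n)%nat -> forall eps, 0 < eps ->
  exists N1, forall N, (N >= N1)%nat -> Rabs (IZR (W (nu0 (2^n) k') N)) <= eps * INR N.
Proof. intros n k' Hk eps Heps.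
  destruct (pow_lt_1_zero (20/27) ltac:(rewrite Rabs_right; lra) (eps*eps/16) ltac:(nra)) as [l Hl].
  specialize (Hl l (le_n _)). rewrite Rabs_right in Hl by (apply Rle_ge, pow_le; lra).
  set (a := 4 ^ l). set (f := 15 ^ l). set (g := 9 ^ l). set (r1 := (20/27)^l). set (r2 := (20/3)^l).
  set (p := INR (2^n)).
  assert (Ha: 0 < a) by (apply pow_lt; lra).
  assert (Hf: 0 < f) by (apply pow_lt; lra).
  assert (Hg: 0 < g) by (apply pow_lt; lra).
  assert (Hr2: 0 < r2) by (apply pow_lt; lra).
  assert (Hp: 0 < p) by (unfold p; apply lt_0_INR, Nat.neq_0_lt_0, Nat.pow_nonzero; lia).
  assert (I1: a * f = g * g * r1).
  { unfold a, f, g, r1. rewrite <- !Rpow_mult_distr. f_equal. lra. }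
  assert (I2: a * f = g * r2).
  { unfold a, f, g, r2. rewrite <- !Rpow_mult_distr. f_equal. lra. }
  destruct (nat_large (16 * r2 * p / (eps*eps) + 4 * a / eps)) as [N1 HN1].
  exists N1. intros N HN. specialize (HN1 N HN).
  destruct (mainZ n k' l N Hk) as [M1 [M2 M3]].
  set (W0 := W (nu0 (2^n) k') N) in *.
  set (wL := W (iterstep (2*l) (nu0 (2^n) k')) (Nseq (2*l) N)) in *.
  set (NL := Nseq (2*l) N) in *.
  apply IZR_le in M1. rewrite abs_IZR, minus_IZR, mult_IZR, <- pow_IZR in M1.
  change (IZR 4 ^ l) with a in M1.
  apply IZR_le in M2. rewrite !mult_IZR, plus_IZR, <- !INR_IZR_INZ, <- pow_IZR in M2.
  rewrite !pow_INR in M2. change (IZR 15 ^ l) with f in M2.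
  replace (INR 4 ^ l) with a in M2 by (unfold a; simpl; f_equal; lra).
  replace (INR 2 ^ n) with p in M2 by (unfold p; rewrite pow_INR; reflexivity).
  rewrite <- Z.pow_2_r in M2 || idtac.
  apply le_INR in M3. rewrite !mult_INR, !pow_INR in M3.
  replace (INR 9 ^ l) with g in M3 by (unfold g; simpl; f_equal; lra).
  replace (INR 4 ^ l) with a in M3 by (unfold a; simpl; f_equal; lra).
  set (w := IZR wL) in *. set (nL := INR NL) in *. set (Nr := INR N) in *.
  replace (wL ^ 2)%Z with (wL * wL)%Z in M2 by ring. rewrite mult_IZR in M2. fold w in M2.
  rewrite mult_INR, pow_INR in M2. replace (INR 4 ^ l) with a in M2 by (unfold a; simpl; f_equal; lra).
  fold p in M2. fold r1 in Hl.
  assert (HnL: 0 <= nL) by apply pos_INR.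
  assert (HNr: 0 <= Nr) by apply pos_INR.
  assert (K1: g * g * (a * (w * w)) <= g * g * (nL * (nL + a * p) * f)) by (apply Rmult_le_compat_l; nra).
  assert (K2: (g * nL) * (g * nL) * f <= (a * Nr) * (a * Nr) * f) by (apply Rmult_le_compat_r; [lra|]; apply Rmult_le_compat; nra).
  assert (K3: g * (g * nL) * a * p * f <= g * (a * Nr) * a * p * f).
  { repeat apply Rmult_le_compat_r; try lra. apply Rmult_le_compat_l; lra. }
  assert (K4: g * g * (a * (w * w)) <= a * (g * g) * (r1 * Nr * Nr + r2 * Nr * p)).
  { replace (a * (g * g) * (r1 * Nr * Nr + r2 * Nr * p)) with
      ((a * Nr) * (a * Nr) * f + g * (a * Nr) * a * p * f).
    - replace (g * g * (nL * (nL + a * p) * f)) with ((g * nL) * (g * nL) * f + g * (g * nL) * a * p * f) in K1 by ring.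
      lra.
    - replace ((a * Nr) * (a * Nr) * f) with (a * (a * f) * Nr * Nr) by ring.
      replace (g * (a * Nr) * a * p * f) with (g * a * (a * f) * Nr * p) by ring.
      rewrite I1 at 1. rewrite I2. ring. }
  assert (K5: w * w <= r1 * Nr * Nr + r2 * Nr * p).
  { assert (0 < a * (g * g)) by (apply Rmult_lt_0_compat; nra).
    apply (Rmult_le_reg_l (a * (g*g))); [assumption|]. nra. }
  assert (K6: r2 * p * 16 <= eps * eps * Nr).
  { assert (16 * r2 * p / (eps * eps) <= Nr) by (assert (0 <= 4 * a / eps) by (apply div_nonneg; lra); lra).
    apply (Rmult_le_compat_l (eps*eps)) in H; [|nra].
    replace (eps * eps * (16 * r2 * p / (eps * eps))) with (16 * r2 * p) in H by (field; lra). lra. }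
  assert (K7: 4 * a <= eps * Nr).
  { assert (4 * a / eps <= Nr) by (assert (0 <= 16 * r2 * p / (eps * eps)) by (apply div_nonneg; nra); lra).
    apply (Rmult_le_compat_l eps) in H; [|lra].
    replace (eps * (4 * a / eps)) with (4 * a) in H by (field; lra). lra. }
  assert (K8: w * w <= (eps * Nr / 2) * (eps * Nr / 2)).
  { assert (r1 * Nr * Nr <= eps * eps / 16 * Nr * Nr) by (apply Rmult_le_compat_r; [lra|]; apply Rmult_le_compat_r; lra).
    assert (r2 * Nr * p * 16 <= eps * eps * Nr * Nr) by nra. nra. }
  assert (K9: Rabs w <= eps * Nr / 2).
  { apply Rsqr_le_abs_0 in K8. rewrite (Rabs_right (eps * Nr / 2)) in K8 by nra.
    exact K8. }
  pose proof (Rabs_triang_inv (IZR W0) w). pose proof (Rabs_triang (IZR W0 - w) w).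
  replace (IZR W0 - w + w) with (IZR W0) in H0 by ring. lra.
Qed.

End Part7.
Import Part7.

Module Part8.
Local Open Scope R_scope.

Lemma theorem18_aux :
  forall (n c : nat) (k : Z), (c <= 1)%nat ->
    is_lim_seq (fun N : nat => INR (C32 n c k N) / INR N)
               (Rbar.Finite (1 / 2 ^ (n + 1))).
Proof.
  intros n c k Hc. apply is_lim_seq_spec. intros [eps Heps]. simpl.
  set (k' := Z.to_nat (k mod 2 ^ Z.of_nat n)).
  assert (HP: (0 < 2^n)%nat) by (apply Nat.neq_0_lt_0, Nat.pow_nonzero; lia).
  assert (Hk: (k' < 2^n)%nat).
  { unfold k'. assert (Hpos: (0 < 2 ^ Z.of_nat n)%Z) by (apply Z.pow_pos_nonneg; lia).
    pose proof (Z.mod_pos_bound k _ Hpos).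
    apply Nat2Z.inj_lt. rewrite Z2Nat.id by lia. rewrite Nat2Z.inj_pow. lia. }
  destruct (Wsmall n k' Hk eps Heps) as [N1 HN1].
  destruct (nat_large (1/eps + 1)) as [N2 HN2].
  exists (max N1 N2). intros N HN.
  specialize (HN1 N ltac:(lia)). specialize (HN2 N ltac:(lia)).
  pose proof (C32_eq n c k N Hc) as E. fold k' in E.
  set (cnt := zsum (nu0 (2^n) k') N) in *.
  set (W0 := W (nu0 (2^n) k') N) in *.
  assert (Hg: forall i, (0 <= nu0 (2^n) k' i)%Z) by (intros; unfold nu0; destruct (_ =? _)%nat; lia).
  pose proof (per_upper (nu0 (2^n) k') (2^n) N Hg (nu0_periodic _ _ HP) HP) as U.
  pose proof (per_lower (nu0 (2^n) k') (2^n) N Hg (nu0_periodic _ _ HP) HP) as Lw.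
  rewrite nu0_sum in U, Lw by exact Hk. fold cnt in U, Lw.
  set (p := INR (2^n)).
  assert (Hp: 0 < p) by (unfold p; apply lt_0_INR; exact HP).
  assert (Hpow: 2 ^ (n+1) = 2 * p) by (unfold p; rewrite pow_INR, pow_add; replace (INR 2) with 2 by (simpl; lra); ring).
  rewrite Hpow.
  set (Nr := INR N) in *.
  assert (HNr: 1 / eps < Nr) by lra.
  assert (HNpos: 0 < Nr).
  { assert (0 < 1/eps) by (unfold Rdiv; rewrite Rmult_1_l; apply Rinv_0_lt_compat; lra). lra. }
  rewrite Z.mul_1_r in U, Lw.
  apply IZR_le in U. apply IZR_le in Lw.
  rewrite mult_IZR, plus_IZR, <- !INR_IZR_INZ in U. rewrite mult_IZR, minus_IZR, <- !INR_IZR_INZ in Lw.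
  fold p Nr in U, Lw.
  set (C := C32 n c k N) in *.
  assert (E2: 2 * INR C = IZR cnt + (1 - 2 * INR c) * IZR W0).
  { rewrite INR_IZR_INZ, INR_IZR_INZ. rewrite <- mult_IZR, E, plus_IZR, mult_IZR, minus_IZR, mult_IZR. reflexivity. }
  assert (Hs: (1 - 2 * INR c) = 1 \/ (1 - 2 * INR c) = -1).
  { destruct c as [|[|]]; simpl; [left; lra|right; lra|lia]. }
  set (s := 1 - 2 * INR c) in *.
  assert (Eq: INR C / Nr - 1 / (2 * p) = ((p * IZR cnt - Nr) + s * p * IZR W0) / (2 * Nr * p)).
  { field_simplify; [|lra|lra]. replace (INR C) with ((IZR cnt + s * IZR W0)/2) by lra. field. lra. }
  rewrite Eq. unfold Rdiv. rewrite Rabs_mult, Rabs_inv, (Rabs_right (2*Nr*p)) by nra.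
  assert (B1: Rabs (p * IZR cnt - Nr + s * p * IZR W0) <= p + p * (eps * Nr)).
  { assert (Rabs (p * IZR cnt - Nr) <= p) by (apply Rabs_le; lra).
    assert (Rabs (s * p * IZR W0) <= p * (eps * Nr)).
    { rewrite !Rabs_mult, (Rabs_right p) by lra.
      destruct Hs as [-> | ->]; rewrite ?Rabs_R1, ?Rabs_m1 || (rewrite Rabs_Ropp, Rabs_R1); nra. }
    pose proof (Rabs_triang (p * IZR cnt - Nr) (s * p * IZR W0)). lra. }
  apply (Rmult_lt_reg_r (2 * Nr * p)); [nra|].
  rewrite Rmult_assoc, Rinv_l, Rmult_1_r by nra.
  assert (1 < eps * Nr).
  { apply (Rmult_lt_compat_l eps) in HNr; [|lra]. replace (eps * (1/eps)) with 1 in HNr by (field; lra). lra. }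
  nra.
Qed.

End Part8.
Import Part8.

Theorem theorem18 :
  forall (n c : nat) (k : Z), (c <= 1)%nat ->
    is_lim_seq (fun N : nat => INR (C32 n c k N) / INR N)
               (Rbar.Finite (1 / 2 ^ (n + 1))).
Proof.
  exact theorem18_aux.
Qed.
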